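(* In the setting of the context (projectively uniformly hyperbolic $\{A_i\}_{i\in X}$ w.r.t. $\Sigma$, fixed multicone, branch states $R$, transition matrix $Q$, recurrent class $C$, local charts $L_{i,a}$ and matrices $B_r$, $r\in C$), we have \[ \lambda_+(B,Q|_C)=\lambda_+(A,P). \]
   Context: $X$ finite; $P$ row-stochastic irreducible; $\Sigma=\{x\in X^{\mathbb N_0}:P_{x_nx_{n+1}}>0\}$; $p$ stationary vector; $\mu$ Markov measure ($\mu([i_0,\dots,i_n])=p_{i_0}P_{i_0i_1}\cdots P_{i_{n-1}i_n}$); $\lambda_+(A,P)$ the $\mu$-a.e. value of $\lim_n\frac1n\log\|A_{x_{n-1}}\cdots A_{x_0}\|$. Projective uniform hyperbolicity: on $\widehat\Sigma=\{(x_n)_{n\in\mathbb Z}:P_{x_nx_{n+1}}>0\}$ with shift $\widehat\sigma$, a continuous splitting $\mathbb R^2=E^d(\hat x)\oplus E^w(\hat x)$ into lines with $A_{x_0}E^*(\hat x)=E^*(\widehat\sigma\hat x)$ and some $n$ with $\|A_{x_{n-1}}\cdots A_{x_0}|_{E^w}\|<\|A_{x_{n-1}}\cdots A_{x_0}|_{E^d}\|$ everywhere. Multicone: $\{M_i\}$ non-empty proper subsets of $\mathbb{RP}^1$, finite unions of open intervals, $\overline{[A_j](M_i)}\subset M_j$ when $P_{ij}>0$. $M_i=\bigsqcup_aM_{i,a}$ (components); $\beta(i,a,j)$ the unique $b$ with $[A_j](\overline{M_{i,a}})\subset M_{j,b}$; $R=\{((i,a),(j,b)):P_{ij}>0,\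 b=\beta(i,a,j)\}$; $s(r)=(i,a)$, $t(r)=(j,b)$, $\tau(r)=j$; $Q_{r,r'}=P_{\tau(r)\tau(r')}$ if $t(r)=s(r')$, else $0$; $C\subset R$ a recurrent class ($Q|_C$ irreducible, closed under transitions). $\mathcal V\subset\mathbb{RP}^1$: classes of non-zero vectors with non-negative entries; $L_{i,a}\in\mathrm{GL}_2(\mathbb R)$ with $[L_{i,a}](\mathcal V)=\overline{M_{i,a}}$; $B_r=\varepsilon(r)L_{t(r)}^{-1}A_{\tau(r)}L_{s(r)}$ with $\varepsilon(r)\in\{\pm1\}$ chosen so $B_r$ is entrywise positive. $\lambda_+(B,Q|_C)$ is the $\mu_C$-a.e. value of $\lim_n\frac1n\log\|B_{r_{n-1}}\cdots B_{r_0}\|$, where $\mu_C$ is the Markov measure of $Q|_C$ (with its stationary probability vector) on $\Sigma_C=\{(r_n)\in C^{\mathbb N_0}:Q_{r_nr_{n+1}}>0\}$. *)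

(* Defs.v *)
From HB Require Import structures.
From mathcomp Require Import all_boot all_order all_algebra.
From mathcomp Require Import all_classical all_reals all_analysis.
From mathcomp Require Import generic_quotient ring.
Import Order.TTheory GRing.Theory Num.Theory numFieldNormedType.Exports.
Local Open Scope classical_set_scope.
Local Open Scope ring_scope.
Set Implicit Arguments.
Unset Strict Implicit.
Unset Printing Implicit Defensive.

Section RP1.
Local Open Scope quotient_scope.
Variable R : realType.
Definition nzvec := set_type [set v : 'cV[R]_2 | v != 0].
Definition c0 (v : 'cV[R]_2) := v ord0 ord0.
Definition c1 (v : 'cV[R]_2) := v ord_max ord0.
Definition collin (u v : nzvec) : bool :=
  c0 (val u) * c1 (val v) == c1 (val u) * c0 (val v).
Lemma collin_refl : reflexive collin.
Proof. by move=> u; rewrite /collin mulrC. Qed.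
Lemma collin_sym : symmetric collin.
Proof. by move=> u v; rewrite /collin eq_sym [c0 _ * _]mulrC [c1 _ * _]mulrC. Qed.
Lemma nz_coord (v : nzvec) : c0 (val v) != 0 \/ c1 (val v) != 0.
Proof.
case: v => v /= /set_mem /= vnz.
case: (eqVneq (c0 v) 0) => h0; last by left.
case: (eqVneq (c1 v) 0) => h1; last by right.
exfalso; move/eqP: vnz; apply; apply/matrixP => i j.
rewrite !mxE (ord1 j); case: (unliftP ord0 i) => [k ->|->] //.
have -> : lift ord0 k = ord_max by apply/val_inj; rewrite (ord1 k).
exact: h1.
Qed.
Lemma collin_trans : transitive collin.
Proof.
move=> v u w; rewrite /collin => /eqP h1 /eqP h2; apply/eqP.
case: (nz_coord v) => hv.
- apply: (mulIf hv).
  have -> : c0 (val u) * c1 (val w) * c0 (val v) = c0 (val u) * (c0 (val v) * c1 (val w)) by ring.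
  rewrite h2.
  have -> : c0 (val u) * (c1 (val v) * c0 (val w)) = (c0 (val u) * c1 (val v)) * c0 (val w) by ring.
  by rewrite h1; ring.
- apply: (mulIf hv).
  have -> : c0 (val u) * c1 (val w) * c1 (val v) = (c0 (val u) * c1 (val v)) * c1 (val w) by ring.
  rewrite h1.
  have -> : c1 (val u) * c0 (val v) * c1 (val w) = c1 (val u) * (c0 (val v) * c1 (val w)) by ring.
  by rewrite h2; ring.
Qed.
Canonical collin_equiv := EquivRel collin collin_refl collin_sym collin_trans.
Definition RP1q := {eq_quot collin}.
Definition RP1 := quotient_topology [the quotType nzvec of RP1q].

Definition e1v : 'cV[R]_2 := \col_i (i == ord0)%:R.
Lemma e1v_nz : e1v \in [set v : 'cV[R]_2 | v != 0].
Proof.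
apply/mem_set; apply/eqP => /matrixP /(_ ord0 ord0); rewrite !mxE eqxx /=.
by move/eqP; rewrite oner_eq0.
Qed.
Definition e1nz : nzvec := exist _ e1v e1v_nz.

Definition mkRP (v : 'cV[R]_2) : RP1 := \pi_RP1 (insubd e1nz v).

Definition act (M : 'M[R]_2) (l : RP1) : RP1 := mkRP (M *m val (repr l)).

Definition vnorm (v : 'cV[R]_2) : R := Num.sqrt (c0 v ^+ 2 + c1 v ^+ 2).
Definition rnorm (M : 'M[R]_2) (l : RP1) : R :=
  vnorm (M *m val (repr l)) / vnorm (val (repr l)).

Definition angvec (t : R) : 'cV[R]_2 := \col_i (if i == ord0 then cos t else sin t).
Definition oint (a b : R) : set RP1 := [set mkRP (angvec t) | t in `]a, b[%classic].
Definition finunion_oint (U : set RP1) : Prop :=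
  exists (n : nat) (a b : nat -> R),
    (forall k, (k < n)%N -> a k < b k) /\ U = \bigcup_(k in `I_n) oint (a k) (b k).

Definition Vcone : set RP1 :=
  [set mkRP v | v in [set v : 'cV[R]_2 | v != 0 /\ forall i, 0 <= v i ord0]].
End RP1.

Section Markov.
Variable R : realType.

Definition stochastic (T : finType) (P : T -> T -> R) : Prop :=
  (forall i j, 0 <= P i j) /\ (forall i, \sum_j P i j = 1).

Definition irreducible (T : finType) (P : T -> T -> R) : Prop :=
  forall i j, connect [rel a b | 0 < P a b] i j.

Definition stationary (T : finType) (p : T -> R) (P : T -> T -> R) : Prop :=
  (forall i, 0 <= p i) /\ \sum_i p i = 1 /\ (forall j, \sum_i p i * P i j = p j).

Fixpoint mprod (T : Type) (A : T -> 'M[R]_2) (x : nat -> T) (n : nat) : 'M[R]_2 :=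
  if n is n'.+1 then A (x n') *m mprod A x n' else 1%:M.
End Markov.

Definition seqsp (T : Type) (x0 : T) := nat -> T.
HB.instance Definition _ (T : Type) (x0 : T) := gen_eqMixin (seqsp x0).
HB.instance Definition _ (T : Type) (x0 : T) := gen_choiceMixin (seqsp x0).
HB.instance Definition _ (T : Type) (x0 : T) :=
  isPointed.Build (seqsp x0) (fun _ => x0).

Definition cyl (T : Type) (x0 : T) (n : nat) (w : nat -> T) : set (seqsp x0) :=
  [set x | forall k, (k < n)%N -> x k = w k].
Arguments cyl {T} x0 n w.
Definition cylinders (T : Type) (x0 : T) : set (set (seqsp x0)) :=
  [set C | exists n w, C = cyl x0 n w].
Arguments cylinders {T} x0.
Notation seqms x0 := (g_sigma_algebraType (cylinders x0)).

Section Measures.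
Variable R : realType.
Local Open Scope ereal_scope.

Definition markov_measure (T : finType) (x0 : T) (p : T -> R) (P : T -> T -> R)
  (mu : probability (seqms x0) R) : Prop :=
  forall (n : nat) (w : nat -> T),
    mu (cyl x0 n.+1 w) = ((p (w 0%N) * \prod_(k < n) P (w k) (w k.+1))%R)%:E.

Definition lyap_ae (T : finType) (x0 : T) (mu : probability (seqms x0) R)
  (A : T -> 'M[R]_2) (la : R) : Prop :=
  {ae mu, forall x : seqms x0,
     (fun n : nat => (n%:R^-1 * ln `|mprod A x n|)%R) @ \oo --> la}.
End Measures.

Section PUH.
Variables (R : realType) (X : finType) (P : X -> X -> R) (A : X -> 'M[R]_2).

Definition hatSigma : set (int -> X) := [set x | forall n : int, 0 < P (x n) (x (n + 1))].
Definition hshift (x : int -> X) : int -> X := fun n => x (n + 1).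

(* continuity on hatSigma for the product topology of the discrete X^Z *)
Definition hcontinuous (E : (int -> X) -> RP1 R) : Prop :=
  forall x, hatSigma x -> forall U, nbhs (E x) U ->
    exists N : nat, forall y, hatSigma y ->
      (forall n : int, (absz n <= N)%N -> y n = x n) -> U (E y).

Definition proj_unif_hyp : Prop :=
  exists Ed Ew : (int -> X) -> RP1 R,
    [/\ hcontinuous Ed, hcontinuous Ew,
        (forall x, hatSigma x -> Ed x <> Ew x),
        (forall x, hatSigma x ->
           act (A (x 0)) (Ed x) = Ed (hshift x) /\ act (A (x 0)) (Ew x) = Ew (hshift x)) &
        exists n : nat, forall x, hatSigma x ->
          rnorm (mprod A (fun k : nat => x (Posz k)) n) (Ew x)
          < rnorm (mprod A (fun k : nat => x (Posz k)) n) (Ed x)].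

Definition multicone (M : X -> set (RP1 R)) : Prop :=
  (forall i, [/\ M i <> set0, M i <> setT & finunion_oint (M i)]) /\
  (forall i j, 0 < P i j -> closure (act (A j) @` M i) `<=` M j).

Definition components_enum (M : X -> set (RP1 R)) (K : X -> finType)
  (Mc : forall i, K i -> set (RP1 R)) : Prop :=
  forall i, [/\ (forall a, exists x, M i x /\ Mc i a = connected_component (M i) x),
             injective (Mc i) &
             (forall x, M i x -> exists a, Mc i a x)].

Section Branch.
Variables (K : X -> finType) (Mc : forall i, K i -> set (RP1 R)).
Definition bstate := {i : X & K i}.
Definition Rrel (r : bstate * bstate) : bool :=
  (0 < P (tag r.1) (tag r.2)) &&
  `[< act (A (tag r.2)) @` closure (Mc (tagged r.1)) `<=` Mc (tagged r.2) >].
Definition branch := {r : bstate * bstate | Rrel r}.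
Definition bs (r : branch) : bstate := (val r).1.
Definition bt (r : branch) : bstate := (val r).2.
Definition btau (r : branch) : X := tag (bt r).
Definition Qm (r r' : branch) : R := if bt r == bs r' then P (btau r) (btau r') else 0.

Definition recurrent_class (C : {set branch}) : Prop :=
  [/\ C != finset.set0,
      (forall r r', r \in C -> 0 < Qm r r' -> r' \in C) &
      (forall r r', r \in C -> r' \in C ->
         connect [rel a b | [&& a \in C, b \in C & 0 < Qm a b]] r r')].

Definition QC (C : {set branch}) (a b : {r : branch | r \in C}) : R := Qm (val a) (val b).

Definition Bm (L : bstate -> 'M[R]_2) (eps : branch -> R) (r : branch) : 'M[R]_2 :=
  eps r *: (invmx (L (bt r)) *m A (btau r) *m L (bs r)).
End Branch.
End PUH.

(* Main.v *)
Require Import Defs.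
From HB Require Import structures.
From mathcomp Require Import all_boot all_order all_algebra.
From mathcomp Require Import all_classical all_reals all_analysis.
From mathcomp Require Import ring lra.
Import Order.TTheory GRing.Theory Num.Theory numFieldNormedType.Exports.
Local Open Scope classical_set_scope.
Local Open Scope ring_scope.
Set Implicit Arguments.
Unset Strict Implicit.
Unset Printing Implicit Defensive.

Section F1.
Variables (R : realType) (T : finType) (P : T -> T -> R).
Hypothesis HP : stochastic P.
Hypothesis Hirr : irreducible P.

Lemma stat_zero (v : T -> R) : (forall i, 0 <= v i) ->
  (forall j, \sum_i v i * P i j = v j) -> forall j, v j = 0 -> forall i, v i = 0.
Proof.
move=> v0 vs j vj0 i.
have /connectP [s pth jl] := Hirr i j; subst j.
elim: s i pth vj0 => [|x s IH] i //= /andP [Pix pth] /(IH _ pth) vx0.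
have : \sum_k v k * P k x = 0 by rewrite vs.
move/eqP; rewrite psumr_eq0; last by move=> k _; rewrite mulr_ge0 // (proj1 HP).
move/allP/(_ i (mem_index_enum _)) => /= /eqP /eqP.
by rewrite mulf_eq0 => /orP [/eqP //|]; rewrite gt_eqF.
Qed.

Lemma stat_pos (v : T -> R) : stationary v P -> forall i, 0 < v i.
Proof.
case=> v0 [v1 vs] i; rewrite lt_def v0 andbT; apply/eqP => vi0.
have := stat_zero v0 vs vi0 => h.
by move: v1; rewrite big1 // => /esym/eqP; rewrite oner_eq0.
Qed.

Lemma stat_unique (v w : T -> R) : stationary v P -> stationary w P -> w = v.
Proof.
move=> sv sw; have vp := stat_pos sv.
case: sv => v0 [v1 vs]; case: sw => w0 [w1 ws].
have [i0 _] : exists i0 : T, True.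
  case: (pickP (@predT T)) => [x _|h]; first by exists x.
  by move: v1; rewrite big_pred0 // => /esym/eqP; rewrite oner_eq0.
pose f i := w i / v i.
have [m [_ hm]] : exists m, True /\ forall i, f m <= f i.
  case: (@arg_minP _ R T i0 xpredT f isT) => m _ hm.
  by exists m; split=> // i; apply: hm.
pose c := f m.
pose u i := w i - c * v i.
have u0 i : 0 <= u i.
  rewrite subr_ge0 -ler_pdivlMr //; exact: hm.
have us j : \sum_i u i * P i j = u j.
  rewrite /u -ws -vs mulr_sumr -sumrB; apply: eq_bigr => i _; ring.
have um : u m = 0 by rewrite /u /c /f /= divfK ?subrr // gt_eqF.
have uz := stat_zero u0 us um.
have wcv i : w i = c * v i by apply/eqP; rewrite -subr_eq0; apply/eqP/uz.
have c1 : c = 1.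
  by move: w1; rewrite (eq_bigr _ (fun i _ => wcv i)) -mulr_sumr v1 mulr1.
by apply: funext => i; rewrite wcv c1 mul1r.
Qed.
End F1.

Lemma sum_part (R : realType) (T J : finType) (f : T -> J) (F : T -> R) :
  \sum_t F t = \sum_j \sum_(t | f t == j) F t.
Proof. exact: (partition_big f xpredT). Qed.

Section Br.
Variables (R : realType) (X : finType) (P : X -> X -> R) (A : X -> 'M[R]_2)
  (K : X -> finType) (Mc : forall i, K i -> set (RP1 R)) (M : X -> set (RP1 R)).
Hypothesis HP : stochastic P.
Hypothesis HMc : components_enum M Mc.
Variable C : {set branch P A Mc}.
Local Notation CT := {r : branch P A Mc | r \in C}.
Variable q : CT -> R.
Hypothesis Hq : stationary q (QC (C:=C)).
Definition tau (c : CT) : X := btau (val c).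

Lemma bstate_eq (t1 t2 : bstate K) y : tag t1 = tag t2 ->
  Mc (tagged t1) y -> Mc (tagged t2) y -> t1 = t2.
Proof.
case: t1 => i a; case: t2 => j b /= e; subst j => h1 h2.
case: (HMc i) => Hcc Hinj _.
have [x1 [Mx1 e1]] := Hcc a; have [x2 [Mx2 e2]] := Hcc b.
have eab : Mc a = Mc b.
  rewrite e1 e2 in h1 h2 *.
  by rewrite (same_connected_component h1) (same_connected_component h2).
by rewrite (Hinj _ _ eab).
Qed.

Lemma Mc_nonempty (s : bstate K) : exists x, Mc (tagged s) x.
Proof.
case: s => i a /=; case: (HMc i) => Hcc _ _.
have [x [Mx e]] := Hcc a; exists x; rewrite e.
exact: connected_component_refl.
Qed.

Lemma QC_val (c c' : CT) : QC c c' != 0 -> QC c c' = P (tau c) (tau c').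
Proof. by rewrite /QC /Qm; case: ifP => //; rewrite eqxx. Qed.

Lemma QC_ge0 (c c' : CT) : 0 <= QC c c'.
Proof. by rewrite /QC /Qm; case: ifP => // _; apply HP.1. Qed.

Lemma QC_uniq (c c1 c2 : CT) : QC c c1 != 0 -> QC c c2 != 0 -> tau c1 = tau c2 -> c1 = c2.
Proof.
rewrite /QC /Qm; case: ifP => [/eqP e1 _|_]; last by rewrite eqxx.
case: ifP => [/eqP e2 _ et|_]; last by rewrite eqxx.
have /andP [_ /asboolP S1] := valP (val c1).
have /andP [_ /asboolP S2] := valP (val c2).
have [x Hx] := Mc_nonempty (bs (val c1)).
have y1 : Mc (tagged (bt (val c1))) (act (A (tau c1)) x).
  apply: S1; exists x => //; exact: subset_closure.
have y2 : Mc (tagged (bt (val c2))) (act (A (tau c1)) x).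
  rewrite et; apply: S2; exists x => //; apply: subset_closure.
  by change (Mc (tagged (bs (val c2))) x); rewrite -e2 e1.
have ebt := bstate_eq et y1 y2.
apply: val_inj; apply: val_inj.
rewrite [val (val c1)]surjective_pairing [val (val c2)]surjective_pairing.
by rewrite -/(bs _) -/(bt _) -/(bs (val c2)) -/(bt (val c2)) ebt -e1 -e2.
Qed.

Lemma QC_tau_le (c : CT) j : \sum_(c' | tau c' == j) QC c c' <= P (tau c) j.
Proof.
case: (pickP (fun c' => (tau c' == j) && (QC c c' != 0))) => [c1 /andP [/eqP t1 n1]| h].
  rewrite (bigD1 c1) /=; last by apply/eqP.
  rewrite [X in _ + X]big1; first by rewrite addr0 QC_val // t1.
  move=> c' /andP [/eqP tc' nc']; apply/eqP; apply: contraR nc' => nz.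
  by apply/eqP; apply: (QC_uniq nz n1); rewrite tc' t1.
rewrite big1; first by apply HP.1.
by move=> c' tc'; move: (h c'); rewrite tc' andTb => /negbFE /eqP.
Qed.

Lemma rowsum_tau (c : CT) : \sum_c' QC c c' = \sum_j \sum_(c' | tau c' == j) QC c c'.
Proof. exact: sum_part. Qed.

Lemma QC_tau_eq (c : CT) j : 0 < q c ->
  \sum_(c' | tau c' == j) QC c c' = P (tau c) j.
Proof.
move=> qc; case: Hq => q0 [q1 qs].
pose D d k := P (tau d) k - \sum_(c' | tau c' == k) QC d c'.
have D0 d k : 0 <= D d k by rewrite subr_ge0 QC_tau_le.
have key : \sum_d q d * \sum_k D d k = 0.
  have e d : \sum_k D d k = 1 - \sum_c' QC d c'.
    by rewrite sumrB rowsum_tau (HP.2 (tau d)).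
  under eq_bigr do rewrite e mulrBr mulr1 mulr_sumr.
  rewrite sumrB q1 exchange_big /=.
  by under eq_bigr do rewrite qs; rewrite q1 subrr.
move/eqP: key; rewrite psumr_eq0; last by move=> i _; rewrite mulr_ge0 ?sumr_ge0.
move/allP/(_ c (mem_index_enum _)) => /=; rewrite mulf_eq0 gt_eqF //=.
rewrite psumr_eq0; last by move=> i _.
move/allP/(_ j (mem_index_enum _)) => /=; rewrite /D subr_eq0 => /eqP <-.
done.
Qed.

Definition ptau (j : X) : R := \sum_(c | tau c == j) q c.

Lemma ptau_stat : stationary ptau P.
Proof.
case: Hq => q0 [q1 qs]; split; [|split].
- by move=> i; rewrite sumr_ge0.
- by rewrite /ptau -q1 [RHS](sum_part tau).
- move=> j'; rewrite /ptau; symmetry.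
  transitivity (\sum_(c' | tau c' == j') \sum_c q c * QC c c').
    by apply: eq_bigr => c' _; rewrite qs.
  rewrite exchange_big /=.
  transitivity (\sum_c q c * P (tau c) j').
    apply: eq_bigr => c _; rewrite -mulr_sumr.
    have [qc0|qcp] := eqVneq (q c) 0; first by rewrite qc0 !mul0r.
    by rewrite QC_tau_eq // lt_def qcp q0.
  rewrite (sum_part tau); apply: eq_bigr => j _.
  rewrite mulr_suml; apply: eq_bigr => c /eqP <-; done.
Qed.
End Br.

Lemma forall_recl n (f : 'I_n.+1 -> bool) :
  [forall k, f k] = f ord0 && [forall k : 'I_n, f (lift ord0 k)].
Proof.
apply/forallP/andP => [h|[h0 /forallP h] k]; first by split => //; apply/forallP => k; apply h.
by case: (unliftP ord0 k) => [j ->|->].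
Qed.

Lemma tuple_sum_cons (R : realType) (T : finType) n (F : n.+1.-tuple T -> R) :
  \sum_t F t = \sum_x \sum_(t : n.-tuple T) F [tuple of x :: t].
Proof.
rewrite pair_bigA (reindex (fun p : T * n.-tuple T => [tuple of p.1 :: p.2])) //.
exists (fun t : n.+1.-tuple T => (thead t, [tuple of behead t])).
  by case=> x t _; rewrite theadE; congr pair; apply: val_inj.
by move=> t _; rewrite -tuple_eta.
Qed.

Lemma tuple_sum0 (R : realType) (T : finType) (F : 0.-tuple T -> R) :
  \sum_t F t = F [tuple].
Proof. by rewrite (big_pred1 [tuple]) // => t; apply/esym/eqP/tuple0. Qed.

Section Tup.
Variables (R : realType) (X : finType) (P : X -> X -> R) (A : X -> 'M[R]_2)
  (K : X -> finType) (Mc : forall i, K i -> set (RP1 R)) (M : X -> set (RP1 R)).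
Hypothesis HP : stochastic P.
Hypothesis HMc : components_enum M Mc.
Variable C : {set branch P A Mc}.
Local Notation CT := {r : branch P A Mc | r \in C}.
Variable q : CT -> R.
Hypothesis Hq : stationary q (QC (C:=C)).
Variable c0 : CT.

Definition Ssum n (c : CT) (w : nat -> X) : R :=
  \sum_(t : n.-tuple CT) (if [forall k : 'I_n, tau (tnth t k) == w k.+1]
     then \prod_(k < n) QC (nth c0 (c :: t) k) (nth c0 (c :: t) k.+1) else 0).

Lemma q_pos_step (c x : CT) : 0 < q c -> QC c x != 0 -> 0 < q x.
Proof.
move=> qc nz; case: Hq => q0 [_ qs].
rewrite -qs (bigD1 c) //=.
apply: (@lt_le_trans _ _ (q c * QC c x)).
  by rewrite mulr_gt0 // lt_def nz (QC_ge0 HP).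
rewrite lerDl sumr_ge0 // => i _; by rewrite mulr_ge0 ?q0 ?(QC_ge0 HP).
Qed.

Lemma Ssum_eq n : forall (c : CT) (w : nat -> X), tau c = w 0%N -> 0 < q c ->
  Ssum n c w = \prod_(k < n) P (w k) (w k.+1).
Proof.
elim: n => [|n IH] c w tc qc.
  rewrite /Ssum tuple_sum0 big_ord0; case: ifP => [_|/negbT/negP []]; first by rewrite big_ord0.
  by apply/forallP => [[]].
rewrite /Ssum tuple_sum_cons big_ord_recl.
transitivity (\sum_x (if tau x == w 1%N then QC c x else 0) *
                \prod_(k < n) P (w k.+1) (w k.+2)).
  apply: eq_bigr => x _.
  have [qx0|qxn] := eqVneq (QC c x) 0.
    rewrite qx0 if_same mul0r big1 // => t _.
    by case: ifP => // _; rewrite big_ord_recl /= qx0 mul0r.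
  have qxp := q_pos_step qc qxn.
  case: ifP => [/eqP tx|/negbT ntx].
    rewrite -(IH x (fun k => w k.+1)) //; rewrite /Ssum mulr_sumr.
    apply: eq_bigr => t _; rewrite forall_recl tnth0 tx eqxx andTb.
    under eq_forallb => k do rewrite tnthS lift0.
    by case: ifP => _; rewrite ?mulr0 // big_ord_recl.
  rewrite mul0r big1 // => t _; rewrite forall_recl tnth0 (negbTE ntx) andFb //.
rewrite -mulr_suml -big_mkcond /= (QC_tau_eq HP HMc Hq) // tc.
done.
Qed.

Lemma full_sum n (w : nat -> X) (p : X -> R) : irreducible P -> stationary p P ->
  \sum_(u : n.+1.-tuple CT) (if [forall k : 'I_n.+1, tau (tnth u k) == w k]
     then q (nth c0 u 0) * \prod_(k < n) QC (nth c0 u k) (nth c0 u k.+1) else 0)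
  = p (w 0%N) * \prod_(k < n) P (w k) (w k.+1).
Proof.
move=> Hirr Hp.
have pe := stat_unique HP Hirr Hp (ptau_stat HP HMc Hq).
have q0 := Hq.1.
rewrite tuple_sum_cons -pe /ptau mulr_suml [RHS]big_mkcond.
apply: eq_bigr => x _.
case: ifP => [/eqP tx| /negbT ntx].
  have [qx0|qxp] := eqVneq (q x) 0.
    rewrite qx0 mul0r big1 // => t _; case: ifP => // _.
    by rewrite mul0r.
  have qxpos : 0 < q x by rewrite lt_def qxp q0.
  rewrite -(Ssum_eq n tx qxpos).
  rewrite /Ssum mulr_sumr; apply: eq_bigr => t _.
  rewrite forall_recl tnth0 tx eqxx andTb.
  under eq_forallb => k do rewrite tnthS lift0.
  by case: ifP => _; rewrite ?mulr0.
rewrite big1 // => t _; rewrite forall_recl tnth0 (negbTE ntx) andFb //.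
Qed.
End Tup.


Section Seq.
Variables (R : realType) (T : finType) (x0 : T).

Lemma seqms_measE : @measurable _ (seqms x0) = <<s cylinders x0 >>.
Proof. by []. Qed.

Lemma cyl_meas n w : measurable (cyl x0 n w : set (seqms x0)).
Proof. by apply: sub_sigma_algebra; exists n, w. Qed.

Definition tup n (y : seqsp x0) : n.-tuple T := [tuple y (val k) | k < n].

Lemma cyl_tupE n (u : n.-tuple T) y : cyl x0 n (nth x0 u) y <-> tup n y = u.
Proof.
split => [h|<- k kn].
  by apply: eq_from_tnth => i; rewrite tnth_mktuple (tnth_nth x0); exact: h (ltn_ord i).
by rewrite -[k]/(val (Ordinal kn)) -tnth_nth tnth_mktuple.
Qed.

Lemma bigsetU_mem_seq (I : eqType) (s : seq I) (Pi : pred I) (F : I -> set (seqsp x0)) y :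
  (\big[setU/set0]_(i <- s | Pi i) F i) y <-> exists i, [/\ i \in s, Pi i & F i y].
Proof.
elim: s => [|a s IH].
  by rewrite big_nil; split => // [[i []]].
rewrite big_cons; case: ifP => Pa.
  split.
    case=> [Fa|/IH [i [si Pi' Fi]]]; first by exists a; rewrite mem_head.
    by exists i; rewrite in_cons si orbT.
  case=> i [+ Pi' Fi]; rewrite in_cons => /orP [/eqP ia|si]; first by left; rewrite -ia.
  by right; apply/IH; exists i.
rewrite IH; split => [[i [si ? ?]]|[i [+ Pi' Fi]]]; first by exists i; rewrite in_cons si orbT.
rewrite in_cons => /orP [/eqP ia|si]; first by rewrite ia Pa in Pi'.
by exists i.
Qed.

Lemma bigsetU_mem (I : finType) (Pi : pred I) (F : I -> set (seqsp x0)) y :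
  (\big[setU/set0]_(i | Pi i) F i) y <-> exists i, Pi i /\ F i y.
Proof.
rewrite bigsetU_mem_seq; split => [[i [_ ? ?]]|[i [? ?]]]; first by exists i.
by exists i; rewrite mem_index_enum.
Qed.

Lemma tupset_E n (Qb : pred (n.-tuple T)) :
  [set y : seqsp x0 | Qb (tup n y)] = \big[setU/set0]_(u | Qb u) cyl x0 n (nth x0 u).
Proof.
apply/seteqP; split => y.
  by move=> /= Qy; apply/bigsetU_mem; exists (tup n y); split => //; apply/cyl_tupE.
by move/bigsetU_mem => [u [Qu /cyl_tupE yu]] /=; rewrite yu.
Qed.

Lemma tupset_meas n (Qb : pred (n.-tuple T)) :
  measurable ([set y : seqsp x0 | Qb (tup n y)] : set (seqms x0)).
Proof. by rewrite tupset_E; apply: bigsetU_measurable => u _; exact: cyl_meas. Qed.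

Lemma tupset_mu (mu : {measure set (seqms x0) -> \bar R}) n (Qb : pred (n.-tuple T)) :
  mu [set y : seqsp x0 | Qb (tup n y)] = (\sum_(u | Qb u) mu (cyl x0 n (nth x0 u)))%E.
Proof.
rewrite tupset_E.
have -> : \big[setU/set0]_(u | Qb u) cyl x0 n (nth x0 u) =
   \big[setU/set0]_(i < #|{: n.-tuple T}| | Qb (enum_val i)) cyl x0 n (nth x0 (enum_val i)).
  by rewrite (eq_bigl (fun u => (u \in {: n.-tuple T}) && Qb u)) // big_enum_val_cond.
rewrite measure_bigsetU_ord_cond.
- symmetry; rewrite (eq_bigl (fun u => (u \in {: n.-tuple T}) && Qb u)) //.
  by rewrite big_enum_val_cond.
- by move=> i _; exact: cyl_meas.
- move=> i j _ _ [y [/cyl_tupE Fi /cyl_tupE Fj]]; apply: enum_val_inj.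
  by rewrite -Fi -Fj.
Qed.

Definition cylG : set (set (seqms x0)) := [set S | S = set0 \/ cylinders x0 S].

Lemma cylG_meas : @measurable _ (seqms x0) = <<s cylG >>.
Proof.
rewrite seqms_measE; apply/seteqP; split.
  apply: sub_smallest2r; first exact: smallest_sigma_algebra.
  by move=> S cS; right.
apply: smallest_sub; first exact: smallest_sigma_algebra.
move=> S [->|cS]; first exact: (@measurable0 _ (seqms x0)).
exact: sub_gen_smallest.
Qed.

Lemma cylG_setI : setI_closed cylG.
Proof.
move=> S1 S2 [->|[n [w ->]]]; first by left; rewrite set0I.
move=> [->|[m [v ->]]]; first by left; rewrite setI0.
case: (pselect (exists k, [/\ (k < n)%N, (k < m)%N & w k <> v k])).
  case=> k [kn km wv]; left; apply/seteqP; split => // y [/= h1 h2].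
  by apply: wv; rewrite -(h1 k kn) (h2 k km).
move=> ncons; right; exists (maxn n m), (fun k => if (k < n)%N then w k else v k).
apply/seteqP; split => y.
  move=> [/= h1 h2] k; rewrite leq_max => /orP [kn|km]; first by rewrite kn h1.
  by case: ifP => kn; [rewrite h1|rewrite h2].
move=> /= h; split => k kk.
  by rewrite h ?kk // leq_max kk.
rewrite h ?leq_max ?kk ?orbT //; case: ifP => // kn.
apply: contra_notP ncons => wv; by exists k.
Qed.

Lemma seq_measure_unique (m1 m2 : {measure set (seqms x0) -> \bar R}) :
  (forall n w, m1 (cyl x0 n w) = m2 (cyl x0 n w)) -> (m1 setT < +oo)%E ->
  forall S, measurable S -> m1 S = m2 S.
Proof.
move=> h1 hfin S mS.
apply: (measure_unique cylG (fun=> setT)) => //.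
- exact: cylG_meas.
- exact: cylG_setI.
- move=> _; right; exists 0%N, (fun=> x0); apply/seteqP; split => // y _ k.
- by rewrite bigcup_const.
- by move=> S' [->|[n [w ->]]]; rewrite ?measure0.
Qed.
End Seq.

Definition fs (T U : finType) (c0 : T) (x0 : U) (f : T -> U) (y : seqms c0) : seqms x0 :=
  fun k => f (y k).
Arguments fs {T U} c0 x0 f y.

Lemma fs_preimage_cyl (T U : finType) (c0 : T) (x0 : U) (f : T -> U) n w :
  fs c0 x0 f @^-1` cyl x0 n w = [set y : seqsp c0 | [forall k : 'I_n, f (tnth (tup n y) k) == w k]].
Proof.
apply/seteqP; split => y /=.
  by move=> h; apply/forallP => k; rewrite tnth_mktuple; apply/eqP; exact: h (ltn_ord k).
move/forallP => h k kn; have := h (Ordinal kn); rewrite tnth_mktuple => /eqP.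
done.
Qed.

Lemma fs_meas (T U : finType) (c0 : T) (x0 : U) (f : T -> U) :
  measurable_fun setT (fs c0 x0 f).
Proof.
apply: (@measurability _ _ (seqms c0) (seqms x0) setT (fs c0 x0 f) (cylinders x0) (seqms_measE x0)).
move=> _ [B [n [w ->]] <-]; rewrite setTI fs_preimage_cyl.
exact: (tupset_meas (fun t : n.-tuple T => [forall k : 'I_n, f (tnth t k) == w k])).
Qed.

Section PFM.
Local Open Scope ereal_scope.
Variables (R : realType) (T U : finType) (c0 : T) (x0 : U) (f : T -> U).
Variable muC : {measure set (seqms c0) -> \bar R}.
Definition pfm : set (seqms x0) -> \bar R := fun A => muC (fs c0 x0 f @^-1` A).
Let mf := @fs_meas T U c0 x0 f.
Let pfm0 : pfm set0 = 0.
Proof. by rewrite /pfm preimage_set0 measure0. Qed.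
Let pfm_ge0 A : 0 <= pfm A.
Proof. exact: measure_ge0. Qed.
Let pfm_sa : semi_sigma_additive pfm.
Proof.
move=> F mF tF mUF; rewrite /pfm preimage_bigcup.
apply: measure_semi_sigma_additive.
- by move=> n; rewrite -[X in measurable X]setTI; exact: mf.
- apply/trivIsetP => /= i j _ _ ij; rewrite -preimage_setI.
  by move/trivIsetP : tF => /(_ _ _ _ _ ij) ->//; rewrite preimage_set0.
- by rewrite -preimage_bigcup -[X in measurable X]setTI; exact: mf.
Qed.
HB.instance Definition _ := isMeasure.Build _ _ _ pfm pfm0 pfm_ge0 pfm_sa.
End PFM.

Lemma ae_transfer (R : realType) (T U : finType) (c0 : T) (x0 : U) (f : T -> U)
  (mu : {measure set (seqms x0) -> \bar R}) (muC : {measure set (seqms c0) -> \bar R})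
  (Pr : seqsp x0 -> Prop) :
  (forall n w, muC (fs c0 x0 f @^-1` cyl x0 n w) = mu (cyl x0 n w)) -> (mu setT < +oo)%E ->
  {ae mu, forall x, Pr x} -> {ae muC, forall y, Pr (fs c0 x0 f y)}.
Proof.
move=> hcyl hfin [N [mN muN0 sN]].
exists (fs c0 x0 f @^-1` N); split.
- rewrite -[X in measurable X]setTI; exact: fs_meas.
- have e := @seq_measure_unique R U x0 mu (pfm f muC) (fun n w => esym (hcyl n w)) hfin N mN.
  by rewrite -muN0 e.
- by move=> y /= nPy; apply: sN.
Qed.

Lemma lim_compare (R : realType) (a b : nat -> R) (la lb lc : R) :
  a @ \oo --> la -> b @ \oo --> lb ->
  (forall n, `|b n.+1 - a n.+1| <= lc * (n.+1%:R)^-1) -> lb = la.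
Proof.
move=> ha hb hd.
have ha' : (fun n => a n.+1) @ \oo --> la by rewrite (cvg_shiftS a).
have hb' : (fun n => b n.+1) @ \oo --> lb by rewrite (cvg_shiftS b).
have hh : (fun n => lc * (n.+1%:R)^-1) @ \oo --> 0.
  rewrite -(mulr0 lc); apply: cvgMl_tmp; exact: cvg_harmonic.
have hh' : (fun n => - (lc * (n.+1%:R)^-1)) @ \oo --> 0.
  rewrite -oppr0; exact: cvgN.
have hd' : (fun n => b n.+1 - a n.+1) @ \oo --> 0.
  apply: (squeeze_cvgr _ hh' hh); apply: nearW => n.
  by rewrite -ler_norml hd.
have hs : (fun n => b n.+1) @ \oo --> la.
  have -> : (fun n => b n.+1) = (fun n => a n.+1) + (fun n => b n.+1 - a n.+1).
    by apply: funext => n /=; rewrite addrC subrK.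
  rewrite -[la]addr0; exact: cvgD.
rewrite -(cvg_lim (@Rhausdorff R) hb'); exact: (cvg_lim (@Rhausdorff R) hs).
Qed.

Section MxNorm.
Variable R : realType.

Lemma mxnorm_entry m n (M : 'M[R]_(m, n)) i j : `|M i j| <= `|M|.
Proof.
have -> : `|M| = mx_norm M by [].
rewrite mx_normrE.
exact: (le_bigmax 0 (fun ij : 'I_m * 'I_n => `|M ij.1 ij.2|) (i, j)).
Qed.

Lemma mxnorm_mul m n p (M : 'M[R]_(m, n)) (N : 'M[R]_(n, p)) :
  `|M *m N| <= n%:R * `|M| * `|N|.
Proof.
have -> : `|M *m N| = mx_norm (M *m N) by [].
rewrite mx_normrE; apply: bigmax_le => [|ij _].
  by rewrite !mulr_ge0.
rewrite mxE; apply: (le_trans (ler_norm_sum _ _ _)).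
apply: (@le_trans _ _ (\sum_(k < n) `|M| * `|N|)).
  apply: ler_sum => k _; rewrite normrM; apply: ler_pM => //; exact: mxnorm_entry.
by rewrite sumr_const card_ord -mulrA mulr_natl.
Qed.
End MxNorm.

Section Main.
Variables (R : realType) (X : finType) (P : X -> X -> R) (A : X -> 'M[R]_2).
Hypotheses (HP : stochastic P) (HPirr : irreducible P).
Variables (M : X -> set (RP1 R)) (K : X -> finType) (Mc : forall i, K i -> set (RP1 R)).
Hypothesis HMc : components_enum M Mc.
Variable C : {set branch P A Mc}.
Local Notation CT := {r : branch P A Mc | r \in C}.
Local Notation tauC := (@tau R X P A K Mc C).
Variables (p : X -> R) (q : CT -> R).
Hypotheses (Hp : stationary p P) (Hq : stationary q (QC (C:=C))).
Variables (x0 : X) (c0 : CT).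
Variables (mu : probability (seqms x0) R) (muC : probability (seqms c0) R).
Hypotheses (Hmu : markov_measure p P mu) (HmuC : markov_measure q (QC (C:=C)) muC).

Lemma cyl_push n w : muC (fs c0 x0 tauC @^-1` cyl x0 n w) = mu (cyl x0 n w).
Proof.
case: n => [|n].
  have e1 : cyl x0 0 w = setT by apply/seteqP; split => // y _ k.
  by rewrite e1 preimage_setT !probability_setT.
rewrite Hmu fs_preimage_cyl.
rewrite (tupset_mu (muC : {measure set (seqms c0) -> \bar R})
   (fun t => [forall k : 'I_n.+1, tauC (tnth t k) == w k])).
transitivity ((\sum_(u | [forall k : 'I_n.+1, tauC (tnth u k) == w k])
   (q (nth c0 u 0) * \prod_(k < n) QC (nth c0 u k) (nth c0 u k.+1)))%:E).
  rewrite -sumEFin; apply: eq_bigr => u _; exact: HmuC.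
congr EFin; rewrite big_mkcond.
exact: (full_sum HP HMc Hq c0 n w HPirr Hp).
Qed.

Lemma valid_ae : {ae muC, forall y : seqms c0, forall k, QC (y k) (y k.+1) != 0}.
Proof.
pose Qk k := fun t : k.+2.-tuple CT => QC (tnth t (inord k)) (tnth t (inord k.+1)) == 0.
have ek k : [set y : seqms c0 | QC (y k) (y k.+1) == 0] =
    [set y : seqsp c0 | Qk k (tup k.+2 y)].
  have i1 : val (inord k : 'I_k.+2) = k by apply: inordK.
  have i2 : val (inord k.+1 : 'I_k.+2) = k.+1 by apply: inordK.
  by apply/seteqP; split => y /=; rewrite /Qk /tup !tnth_mktuple i1 i2.
have hk k : muC [set y : seqms c0 | QC (y k) (y k.+1) == 0] = 0%E.
  rewrite ek (tupset_mu (muC : {measure set (seqms c0) -> \bar R}) (Qk k)).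
  rewrite big1 // => u /eqP Qu; apply: eq_trans (HmuC k.+1 (nth c0 u)) _.
  rewrite !(tnth_nth c0) !inordK // in Qu.
  have -> : \prod_(j < k.+1) QC (nth c0 u j) (nth c0 u j.+1) = 0.
    by rewrite (bigD1 ord_max) //= Qu mul0r.
  by rewrite mulr0.
apply: (@negligibleS _ _ _ muC (\bigcup_k [set y : seqms c0 | QC (y k) (y k.+1) == 0])).
  move=> y /= ny; have [k hk'] : exists k, ~ (QC (y k) (y k.+1) != 0).
    by apply/existsNP.
  by exists k => //=; apply/negbNE/negP.
apply: negligible_bigcup => k; apply/negligibleP; last exact: hk.
rewrite ek; exact: (tupset_meas (Qk k)).
Qed.

Variables (L : bstate K -> 'M[R]_2) (eps : branch P A Mc -> R).
Hypothesis HLu : forall s, L s \in unitmx.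
Hypothesis Heps : forall r, eps r = 1 \/ eps r = -1.
Hypothesis HA : forall i, A i \in unitmx.

Lemma QC_link (c c' : CT) : QC c c' != 0 -> bt (val c) = bs (val c').
Proof. by rewrite /QC /Qm; case: ifP => [/eqP //|_]; rewrite eqxx. Qed.

Local Notation Bf := (fun c : CT => Bm L eps (val c)).

Lemma mprod_tele (y : nat -> CT) (hv : forall k, QC (y k) (y k.+1) != 0) n :
  mprod Bf y n.+1 = (\prod_(k < n.+1) eps (val (y k))) *:
    (invmx (L (bt (val (y n)))) *m mprod A (fun k => tauC (y k)) n.+1 *m L (bs (val (y 0%N)))).
Proof.
elim: n => [|n IH].
  by rewrite /= big_ord1 !mulmx1.
have -> : mprod Bf y n.+2 = Bf (y n.+1) *m mprod Bf y n.+1 by [].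
rewrite IH.
have -> : mprod A (fun k => tauC (y k)) n.+2 =
  A (tauC (y n.+1)) *m mprod A (fun k => tauC (y k)) n.+1 by [].
rewrite /Bm -scalemxAr -scalemxAl scalerA.
congr (_ *: _); first by rewrite [RHS]big_ord_recr; reflexivity.
rewrite -(QC_link (hv n)).
set Li1 := invmx _; set A1 := A _; set L1 := L _; set Li0 := invmx L1.
set Mn := mprod _ _ _; set L0 := L _.
have e : Li1 *m A1 *m L1 *m (Li0 *m Mn *m L0) = Li1 *m A1 *m (L1 *m Li0) *m Mn *m L0.
  by rewrite !mulmxA.
rewrite e mulmxV; last exact: HLu.
by rewrite mulmx1 !mulmxA.
Qed.

Definition a0 := \big[Order.max/0]_(s : bstate K) `|invmx (L s)|.
Definition b0 := \big[Order.max/0]_(s : bstate K) `|L s|.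

Lemma a0_ge s : `|invmx (L s)| <= a0.
Proof. exact: (le_bigmax 0 (fun s => `|invmx (L s)|) s). Qed.
Lemma b0_ge s : `|L s| <= b0.
Proof. exact: (le_bigmax 0 (fun s => `|L s|) s). Qed.

Lemma mx3_le (L1 M' L2 : 'M[R]_2) : `|L1 *m M' *m L2| <= 4 * `|L1| * `|M'| * `|L2|.
Proof.
have h1 := mxnorm_mul (L1 *m M') L2; have h2 := mxnorm_mul L1 M'.
have n1 := normr_ge0 L1; have n2 := normr_ge0 M'; have n3 := normr_ge0 L2.
have n4 := normr_ge0 (L1 *m M').
apply: (le_trans h1).
have -> : (4 : R) * `|L1| * `|M'| * `|L2| = 2%:R * (2%:R * `|L1| * `|M'|) * `|L2|.
  by ring.
by rewrite ler_wpM2r // ler_wpM2l.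
Qed.

Lemma prod_eps_norm (y : nat -> CT) n : `|\prod_(k < n) eps (val (y k))| = 1.
Proof.
rewrite normr_prod big1 // => k _.
by case: (Heps (val (y k))) => ->; rewrite ?normrN normr1.
Qed.

Lemma mprodA_unit (x : nat -> X) n : mprod A x n \in unitmx.
Proof. by elim: n => [|n IH] /=; [exact: unitmx1 | rewrite unitmx_mul HA IH]. Qed.

Lemma unit_norm_gt0 (M' : 'M[R]_2) : M' \in unitmx -> 0 < `|M'|.
Proof.
rewrite normr_gt0; apply: contraTneq => ->.
by rewrite unitmxE det0 unitr0.
Qed.

Lemma arith4 (a b m l1 l2 : R) : 0 <= l1 -> 0 <= l2 -> 0 <= m ->
  l1 <= a -> l2 <= b -> 4 * l1 * m * l2 <= 4 * a * b * m.
Proof.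
move=> h1 h2 hm ha hb.
have a0' : 0 <= a := le_trans h1 ha.
apply: (@le_trans _ _ (4 * a * m * l2)).
  by rewrite ler_wpM2r // ler_wpM2r // ler_wpM2l.
have -> : 4 * a * b * m = 4 * a * m * b by ring.
by rewrite ler_wpM2l // !mulr_ge0.
Qed.

Lemma B_le (y : nat -> CT) (hv : forall k, QC (y k) (y k.+1) != 0) n :
  `|mprod Bf y n.+1| <= 4 * a0 * b0 * `|mprod A (fun k => tauC (y k)) n.+1|.
Proof.
rewrite mprod_tele // normrZ prod_eps_norm mul1r.
apply: (le_trans (mx3_le _ _ _)).
have h1 := a0_ge (bt (val (y n))); have h2 := b0_ge (bs (val (y 0%N))).
have n1 := normr_ge0 (invmx (L (bt (val (y n))))).
have n2 := normr_ge0 (mprod A (fun k => tauC (y k)) n.+1).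
apply: arith4 => //; by [apply: a0_ge | apply: b0_ge].
Qed.

Lemma A_le (y : nat -> CT) (hv : forall k, QC (y k) (y k.+1) != 0) n :
  `|mprod A (fun k => tauC (y k)) n.+1| <= 4 * a0 * b0 * `|mprod Bf y n.+1|.
Proof.
rewrite mprod_tele // normrZ prod_eps_norm mul1r.
set Mn := mprod A _ _; set Lt := L (bt _); set Ls := L (bs _).
have e : Mn = Lt *m (invmx Lt *m Mn *m Ls) *m invmx Ls.
  rewrite !mulmxA mulmxV ?mul1mx; last exact: HLu.
  by rewrite -mulmxA mulmxV ?mulmx1 //; exact: HLu.
rewrite {1}e; apply: (le_trans (mx3_le _ _ _)).
have -> : 4 * a0 * b0 * `|invmx Lt *m Mn *m Ls| = 4 * b0 * a0 * `|invmx Lt *m Mn *m Ls| by ring.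
apply: arith4 => //; by [apply: a0_ge | apply: b0_ge].
Qed.

Lemma log_bound (y : nat -> CT) (hv : forall k, QC (y k) (y k.+1) != 0) n :
  `|(n.+1%:R)^-1 * ln `|mprod Bf y n.+1| -
    (n.+1%:R)^-1 * ln `|mprod A (fun k => tauC (y k)) n.+1| |
  <= ln (4 * a0 * b0) * (n.+1%:R)^-1.
Proof.
set x := `|mprod Bf y n.+1|; set z := `|mprod A _ n.+1|.
set cc := 4 * a0 * b0.
have zpos : 0 < z by apply: unit_norm_gt0; exact: mprodA_unit.
have hx : x <= cc * z := B_le hv n.
have hz : z <= cc * x := A_le hv n.
have cx : 0 < cc * x := lt_le_trans zpos hz.
have cc0 : 0 <= cc.
  rewrite /cc mulr_ge0 ?mulr_ge0 //.
    exact: le_trans (normr_ge0 _) (a0_ge (bs (val (y 0%N)))).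
  exact: le_trans (normr_ge0 _) (b0_ge (bs (val (y 0%N)))).
have ccpos : 0 < cc.
  rewrite lt_def cc0 andbT; apply/eqP => c0'; move: cx; by rewrite c0' mul0r ltxx.
have xpos : 0 < x by move: cx; rewrite pmulr_rgt0.
have pos_ (t : R) : 0 < t -> t \in Num.pos by [].
have czpos : 0 < cc * z by rewrite mulr_gt0.
have cxpos : 0 < cc * x by rewrite mulr_gt0.
have l1 : ln x <= ln cc + ln z.
  rewrite -(lnM (pos_ _ ccpos) (pos_ _ zpos)).
  by rewrite (ler_ln (pos_ _ xpos) (pos_ _ czpos)).
have l2 : ln z <= ln cc + ln x.
  rewrite -(lnM (pos_ _ ccpos) (pos_ _ xpos)).
  by rewrite (ler_ln (pos_ _ zpos) (pos_ _ cxpos)).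
rewrite -mulrBr normrM ger0_norm ?invr_ge0 ?ler0n // mulrC.
rewrite ler_wpM2r ?invr_ge0 ?ler0n //.
rewrite ler_norml; apply/andP; split; lra.
Qed.

Theorem main_sec (lamA lamB : R) :
  lyap_ae mu A lamA -> lyap_ae muC Bf lamB -> lamB = lamA.
Proof.
move=> hA hB.
have fin : (mu setT < +oo)%E by rewrite probability_setT ltry.
have hA' := @ae_transfer R CT X c0 x0 tauC mu muC _ cyl_push fin hA.
have hv := valid_ae.
have muC0 : (0 < muC setT)%E by rewrite probability_setT lte01.
have PF := ae_properfilter_algebraOfSetsType muC0.
have [y [h1 h2 h3]] : exists y : seqms c0,
   [/\ (fun n : nat => (n%:R^-1 * ln `|mprod Bf y n|)%R) @ \oo --> lamB,
       (fun n : nat => (n%:R^-1 * ln `|mprod A (fs c0 x0 tauC y) n|)%R) @ \oo --> lamA &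
       forall k, QC (y k) (y k.+1) != 0].
  apply: (@filter_ex _ _ PF).
  have FF : Filter (almost_everywhere muC) := ae_filter_ringOfSetsType muC.
  move: hB hA' hv; rewrite /lyap_ae => hB hA' hv.
  exact: (filterS3 FF (fun y a b c => And3 a b c) hB hA' hv).
exact: (lim_compare h2 h1 (fun n => log_bound h3 n)).
Qed.
End Main.

Theorem lemma3p3 (R : realType) (X : finType) (P : X -> X -> R)
  (A : X -> 'M[R]_2)
  (HP : stochastic P) (HPirr : irreducible P)
  (HA : forall i, A i \in unitmx)
  (Hpuh : proj_unif_hyp P A)
  (M : X -> set (RP1 R)) (HM : multicone P A M)
  (K : X -> finType) (Mc : forall i, K i -> set (RP1 R))
  (HMc : components_enum M Mc)
  (C : {set branch P A Mc}) (HC : recurrent_class C)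
  (L : bstate K -> 'M[R]_2)
  (HL : forall s : bstate K, L s \in unitmx /\
          act (L s) @` @Vcone R = closure (Mc (tag s) (tagged s)))
  (eps : branch P A Mc -> R) (Heps : forall r, eps r = 1 \/ eps r = -1)
  (HB : forall r i j, 0 < Bm L eps r i j)
  (p : X -> R) (Hp : stationary p P)
  (q : {r : branch P A Mc | r \in C} -> R) (Hq : stationary q (QC (C:=C)))
  (x0 : X) (c0 : {r : branch P A Mc | r \in C})
  (mu : probability (seqms x0) R) (Hmu : markov_measure p P mu)
  (muC : probability (seqms c0) R) (HmuC : markov_measure q (QC (C:=C)) muC)
  (lamA lamB : R)
  (HlamA : lyap_ae mu A lamA)
  (HlamB : lyap_ae muC (fun c => Bm L eps (val c)) lamB) :
  lamB = lamA.
Proof.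
exact: (main_sec HP HPirr HMc Hp Hq Hmu HmuC (fun s => (HL s).1) Heps HA HlamA HlamB).
Qed.
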